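(* Let $\Gamma$ be a finite graph with vertex set $\{1,\dots,n\}$ and $c$ an acyclic orientation of $\Gamma$. For an equivalence class $u$ of $c$-admissible sequences, let $\phi(u)$ be the function on vertices with $\phi(u)_x$ equal to the number of occurrences of $x$ in any representative of $u$. Then the map $\phi$ from the set $\mathfrak{S}_c$ of equivalence classes of $c$-admissible sequences to integer-valued functions on the vertices is injective.
   Context: For an acyclic orientation $c$ of $\Gamma$ and a sink $x$ of $(\Gamma,c)$, $s_xcs_x$ denotes the orientation obtained by reversing all edges coming into $x$. A sequence $x_1,\dots,x_N$ of vertices is $c$-admissible if $x_1$ is a sink of $(\Gamma,c)$, $x_2$ is a sink of $(\Gamma, s_{x_1}cs_{x_1})$, $x_3$ is a sink of $(\Gamma, s_{x_2}s_{x_1}cs_{x_1}s_{x_2})$, and so on. Two admissible sequences are equivalent if one can be obtained from the other by repeatedly interchanging adjacent entries which are non-adjacent vertices of $\Gamma$ (this preserves admissibility and the number of occurrences of each vertex); $\mathfrak{S}_c$ is the set of equivalence classes. *)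

(* Defs.v *)
From mathcomp Require Import all_boot.
Set Implicit Arguments. Unset Strict Implicit. Unset Printing Implicit Defensive.

Definition simple_graph (n : nat) (e : rel 'I_n) : Prop :=
  (forall x, ~~ e x x) /\ (forall x y, e x y = e y x).

(* An orientation c of e: o x y means the edge {x,y} is oriented x -> y. *)
Definition orientation (n : nat) (e : rel 'I_n) (o : rel 'I_n) : Prop :=
  (forall x y, o x y -> e x y) /\
  (forall x y, e x y -> (o x y && ~~ o y x) || (o y x && ~~ o x y)).

Definition acyclic_or (n : nat) (o : rel 'I_n) : Prop :=
  forall (x : 'I_n) (p : seq 'I_n), ~ (path o x p /\ o (last x p) x).

Definition is_sink (n : nat) (o : rel 'I_n) (x : 'I_n) : bool :=
  [forall y, ~~ o x y].

(* s_x c s_x : reverse all edges coming into x. *)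
Definition flip (n : nat) (o : rel 'I_n) (x : 'I_n) : rel 'I_n :=
  fun a b => (o a b && (b != x)) || ((a == x) && o b a).

Fixpoint admissible (n : nat) (o : rel 'I_n) (s : seq 'I_n) : bool :=
  match s with
  | [::] => true
  | x :: s' => is_sink o x && admissible (flip o x) s'
  end.

Definition swap_step (n : nat) (e : rel 'I_n) (s t : seq 'I_n) : Prop :=
  exists (s1 s2 : seq 'I_n) (a b : 'I_n),
    ~~ e a b /\ s = s1 ++ a :: b :: s2 /\ t = s1 ++ b :: a :: s2.

(* Equivalence of sequences: reflexive-transitive closure of swap_step
   (swap_step is symmetric, so this is an equivalence relation). *)
Inductive seq_equiv (n : nat) (e : rel 'I_n) : seq 'I_n -> seq 'I_n -> Prop :=
  | seq_equiv_refl s : seq_equiv e s s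
  | seq_equiv_step s t u : swap_step e s t -> seq_equiv e t u -> seq_equiv e s u.

(* Main.v *)
Require Import Defs.
From mathcomp Require Import all_boot.
From mathcomp Require Import zify.
Set Implicit Arguments. Unset Strict Implicit.

Section Aux.
Variable n : nat.
Implicit Types (o : rel 'I_n) (e : rel 'I_n).

Lemma flip_ext o o' x : (forall u v, o u v = o' u v) ->
  forall u v, flip o x u v = flip o' x u v.
Proof. by move=> H u v; rewrite /flip !H. Qed.

Lemma sink_ext o o' x : (forall u v, o u v = o' u v) -> is_sink o x = is_sink o' x.
Proof. by move=> H; rewrite /is_sink; apply: eq_forallb => y; rewrite H. Qed.

Lemma adm_ext s : forall o o', (forall u v, o u v = o' u v) ->
  admissible o s = admissible o' s.
Proof.
elim: s => [//|x s IH] o o' H /=.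
by rewrite (sink_ext x H) (IH _ _ (flip_ext x H)).
Qed.

Lemma flip_comm o a b : a != b -> o a b = false -> o b a = false ->
  forall u v, flip (flip o a) b u v = flip (flip o b) a u v.
Proof.
move=> ab oab oba u v; rewrite /flip.
have [->|ua] := eqVneq u a; have [->|va] := eqVneq v a;
have [Hub|ub] := eqVneq u b; have [Hvb|vb] := eqVneq v b;
  subst; rewrite ?eqxx ?(negbTE ab) ?(negbTE ua) ?(negbTE va) ?(negbTE ub) ?(negbTE vb)
   ?oab ?oba ?andbF ?andbT ?orbF ?orbT //=;
  try (by rewrite eq_sym (negbTE ab) ?andbF ?orbF ?andbT);
  by rewrite ?andbF ?orbF ?andbT ?orbT ?andbb ?orbb // ?orbC.
Qed.

Variable e : rel 'I_n.
Hypothesis esym : forall x y, e x y = e y x.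
Hypothesis eirr : forall x, ~~ e x x.

Definition sub_e o := forall u v, o u v -> e u v.
Definition tot o := forall u v, e u v -> o u v || o v u.

Lemma flip_sub o x : sub_e o -> sub_e (flip o x).
Proof.
move=> H u v; rewrite /flip => /orP [/andP [/H //] | /andP [_ /H]].
by rewrite esym.
Qed.

Lemma flip_tot o x : tot o -> tot (flip o x).
Proof.
move=> H u v euv; rewrite /flip.
have uv : u != v by apply/eqP => E; subst; move: (eirr v); rewrite euv.
move: (H _ _ euv).
have [->|ux] := eqVneq u x; have [->|vx] := eqVneq v x;
  rewrite ?eqxx ?andbT ?andbF ?orbF ?orbT //=.
- by rewrite orbC.
Qed.

Lemma into_x o x t1 rest : (forall y, e x y -> o y x) -> x \notin t1 ->
  admissible o (t1 ++ rest) -> forall y, y \in t1 -> ~~ e x y.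
Proof.
elim: t1 o => [//|z t1 IH] o Hin /=; rewrite in_cons negb_or => /andP [xz xt1].
move=> /andP [sk ad] y; rewrite in_cons => /orP [/eqP -> | yt1].
  apply/negP => exz; move: (Hin _ exz) => ozx.
  by move/forallP: sk => /(_ x); rewrite ozx.
apply: (IH (flip o z)) => // y' exy'.
by rewrite /flip Hin // xz.
Qed.

Lemma move_x o x t1 t2 : sub_e o -> x \notin t1 -> (forall y, y \in t1 -> ~~ e x y) ->
  admissible o (t1 ++ x :: t2) -> admissible o (x :: t1 ++ t2).
Proof.
elim: t1 o => [//|y t1 IH] o so /=; rewrite in_cons negb_or => /andP [xy xt1] He.
have nexy : ~~ e x y by apply: He; rewrite in_cons eqxx.
have oxy : o x y = false by apply/negP => /so; apply/negP.
have oyx : o y x = false by apply/negP => /so; rewrite esym; apply/negP.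
move=> /andP [sky].
move/(IH _ (@flip_sub o y so) xt1 (fun z hz => He z (mem_behead (s := y :: t1) hz))) => /= /andP [skx ad].
apply/and3P; split.
- apply/forallP => v; move/forallP: skx => /(_ v); rewrite /flip.
  by rewrite (negbTE xy) /= orbF; case: (eqVneq v y) => [->|_]; rewrite ?oxy ?andbT.
- apply/forallP => v; rewrite /flip (eq_sym y) (negbTE xy) /= orbF.
  by move/forallP: sky => /(_ v) /negbTE ->.
- by rewrite (adm_ext _ (flip_comm xy oxy oyx)).
Qed.

Lemma equiv_cons y s t : seq_equiv e s t -> seq_equiv e (y :: s) (y :: t).
Proof.
elim=> [s0|s0 t0 u0 [s1 [s2 [a [b [ab [-> ->]]]]]] _ IH]; first exact: seq_equiv_refl.
apply: seq_equiv_step IH; exists (y :: s1), s2, a, b; done.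
Qed.

Lemma equiv_trans s t u : seq_equiv e s t -> seq_equiv e t u -> seq_equiv e s u.
Proof.
elim=> // s0 t0 u0 st _ IH tu; apply: seq_equiv_step st (IH tu).
Qed.

Lemma equiv_move x t1 t2 : (forall y, y \in t1 -> ~~ e x y) ->
  seq_equiv e (x :: t1 ++ t2) (t1 ++ x :: t2).
Proof.
elim: t1 => [|y t1 IH] He /=; first exact: seq_equiv_refl.
apply: (seq_equiv_step (t := y :: x :: t1 ++ t2)).
  exists [::], (t1 ++ t2), x, y; split => //; by apply: He; rewrite in_cons eqxx.
apply: equiv_cons; apply: IH => z hz; apply: He; by rewrite in_cons hz orbT.
Qed.

Lemma split_first (x : 'I_n) t : x \in t -> exists t1 t2, t = t1 ++ x :: t2 /\ x \notin t1.
Proof.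
elim: t => [//|z t IH]; rewrite in_cons; have [->|xz] := eqVneq x z.
  by move=> _; exists [::], t.
move=> /= /IH [t1 [t2 [-> h]]]; exists (z :: t1), t2; split => //.
by rewrite in_cons negb_or xz.
Qed.

Lemma main s : forall o t, sub_e o -> tot o ->
  admissible o s -> admissible o t ->
  (forall x : 'I_n, count_mem x s = count_mem x t) -> seq_equiv e s t.
Proof.
elim: s => [|x s IH] o t so to ads adt cnt.
  case: t adt cnt => [|y t] _ cnt; first exact: seq_equiv_refl.
  by move: (cnt y) => /=; rewrite eqxx.
have xt : x \in t by rewrite -has_pred1 has_count -cnt /= eqxx.
case: (split_first xt) => t1 [t2 [tE xt1]]; subst t.
move: ads => /= /andP [skx ads].
have Hin : forall y, e x y -> o y x.
  move=> y exy; move: (to _ _ exy); move/forallP: skx => /(_ y) /negbTE -> //.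
have He := into_x Hin xt1 adt.
have := move_x so xt1 He adt => /= /andP [_ adt'].
apply: (@equiv_trans _ (x :: t1 ++ t2)); last exact: equiv_move.
apply: equiv_cons; apply: (IH (flip o x)) => //.
- exact: flip_sub.
- exact: flip_tot.
- move=> z; move: (cnt z); rewrite /= !count_cat /=; lia.
Qed.
End Aux.

Theorem corollary6 (n : nat) (e : rel 'I_n) (c : rel 'I_n) :
  simple_graph e -> orientation e c -> acyclic_or c ->
  forall s t : seq 'I_n,
    admissible c s -> admissible c t ->
    (forall x : 'I_n, count_mem x s = count_mem x t) ->
    seq_equiv e s t.
Proof.
move=> [irr sym] [sub tot] _ s t.
apply: (main sym irr) => // u v /tot /orP [/andP [-> _] | /andP [-> _]] //.
by rewrite orbT.
Qed.
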